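(* Let $m\ge 1$ and $n,k$ be positive integers. For $v=1,\dots,m$ let $X^{(v)}$ be a real $n\times p_v$ centered data matrix, let $X=[X^{(1)},\dots,X^{(m)}]$ with $p=p_1+\cdots+p_m$, and let $K^{(v)}=X^{(v)}{X^{(v)}}^T$. Let $X=UDV^T$ be a singular value decomposition of $X$ ($U$ $n\times n$ orthogonal, $V$ $p\times p$ orthogonal, $D$ $n\times p$ rectangular diagonal) with singular values in non-increasing order. Let $U_k$ be the first $k$ columns of $U$, $Q$ an arbitrary $k\times k$ orthogonal matrix, and $H=U_kQ$. Write $V^T=[{V^{(1)}}^T,\dots,{V^{(m)}}^T]$ with ${V^{(v)}}^T$ the $p\times p_v$ block of columns of $V^T$ for view $v$, and let ${V_{1:k}^{(v)}}^T$ be the top $k$ rows of ${V^{(v)}}^T$. Then for every $v$, $$\mathrm{tr}\big(K^{(v)}-H^TK^{(v)}H\big)=\mathrm{tr}\big(X^{(v)}{X^{(v)}}^T\big)-\Big(\mathrm{tr}\big({V_{1:k}^{(v)}}^T{X^{(v)}}^TX^{(v)}V_{1:k}^{(v)}\big)+\sum_{w\neq v}\mathrm{tr}\big({V_{1:k}^{(v)}}^T{X^{(v)}}^TX^{(w)}V_{1:k}^{(w)}\big)\Big).$$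
   Context: All matrices are real; $\mathrm{tr}$ denotes the trace. *)

(* Defs.v *)
From mathcomp Require Import all_boot all_order all_algebra.
Set Implicit Arguments. Unset Strict Implicit. Unset Printing Implicit Defensive.
Import Order.TTheory GRing.Theory Num.Theory.
Local Open Scope ring_scope.

Definition orthogonal_mx (R : realFieldType) (n : nat) (A : 'M[R]_n) : Prop :=
  A^T *m A = 1%:M /\ A *m A^T = 1%:M.

Definition centered (R : realFieldType) (n p : nat) (A : 'M[R]_(n, p)) : Prop :=
  forall j : 'I_p, \sum_(i < n) A i j = 0.

Definition rect_diag_nonincr (R : realFieldType) (n p : nat) (D : 'M[R]_(n, p)) : Prop :=
  [/\ forall (i : 'I_n) (j : 'I_p), (i : nat) <> j -> D i j = 0,
      forall (i : 'I_n) (j : 'I_p), (i : nat) = j -> 0 <= D i j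
    & forall (i1 i2 : 'I_n) (j1 j2 : 'I_p), (i1 : nat) = j1 -> (i2 : nat) = j2 ->
        (i1 <= i2)%N -> D i2 j2 <= D i1 j1].

Definition is_svd (R : realFieldType) (n p : nat)
  (X : 'M[R]_(n, p)) (U : 'M[R]_n) (D : 'M[R]_(n, p)) (V : 'M[R]_p) : Prop :=
  [/\ orthogonal_mx U, orthogonal_mx V, rect_diag_nonincr D & X = U *m D *m V^T].

Definition first_cols (R : Type) (n q k : nat) (hk : (k <= q)%N) (A : 'M[R]_(n, q))
  : 'M[R]_(n, k) := \matrix_(i < n, j < k) A i (widen_ord hk j).

Definition first_rows (R : Type) (q r k : nat) (hk : (k <= q)%N) (A : 'M[R]_(q, r))
  : 'M[R]_(k, r) := \matrix_(i < k, j < r) A (widen_ord hk i) j.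

(* Main.v *)
Require Import Defs.
From mathcomp Require Import all_boot all_order all_algebra.
Import Order.TTheory GRing.Theory Num.Theory.
Local Open Scope ring_scope.

Lemma first_rowsE (R : realFieldType) (q r k : nat) (hk : (k <= q)%N) (A : 'M[R]_(q, r)) :
  first_rows hk A = pid_mx k *m A.
Proof.
apply/matrixP=> i j; rewrite !mxE (bigD1 (widen_ord hk i)) //= big1 ?addr0.
  by rewrite !mxE /= eqxx ltn_ord mul1r.
move=> l /negPf Hl; rewrite !mxE.
suff -> : ((i : nat) == l) = false by rewrite mul0r.
by apply/negbTE; apply: contraFN Hl => /eqP E; apply/eqP/val_inj.
Qed.

Lemma first_colsE (R : realFieldType) (n q k : nat) (hk : (k <= q)%N) (A : 'M[R]_(n, q)) :
  first_cols hk A = A *m pid_mx k.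
Proof.
apply/matrixP=> i j; rewrite !mxE (bigD1 (widen_ord hk j)) //= big1 ?addr0.
  by rewrite !mxE /= eqxx ltn_ord mulr1.
move=> l /negPf Hl; rewrite !mxE.
suff -> : ((l : nat) == j) = false by rewrite mulr0.
by apply/negbTE; apply: contraFN Hl => /eqP E; apply/eqP/val_inj.
Qed.

Lemma diag_pid (R : realFieldType) (n p k : nat) (D : 'M[R]_(n, p)) :
  (forall (i : 'I_n) (j : 'I_p), (i : nat) <> j -> D i j = 0) ->
  D *m pid_mx k = pid_mx k *m D.
Proof.
move=> HD; apply/matrixP=> i j; rewrite !mxE.
rewrite (bigD1 j) //= big1 ?addr0; last first.
  move=> l /negPf Hl; rewrite !mxE.
  suff -> : ((l : nat) == j) = false by rewrite mulr0.
  by apply/negbTE; apply: contraFN Hl => /eqP E; apply/eqP/val_inj.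
rewrite (bigD1 i) //= big1 ?addr0; last first.
  move=> l /negPf Hl; rewrite !mxE.
  suff -> : ((i : nat) == l) = false by rewrite mul0r.
  by apply/negbTE; apply: contraFN Hl => /eqP E; apply/eqP/val_inj.
rewrite !mxE !eqxx /=.
have [E|NE] := eqVneq (i : nat) (j : nat).
  by rewrite E mulrC.
by rewrite HD ?mulr0 ?mul0r //; apply/eqP.
Qed.

Theorem proposition2 (R : realFieldType) (m n k : nat) (pv : 'I_m -> nat)
  (Xs : forall v : 'I_m, 'M[R]_(n, pv v))
  (U : 'M[R]_n) (D : 'M[R]_(n, \sum_(v < m) pv v)) (V : 'M[R]_(\sum_(v < m) pv v))
  (Q : 'M[R]_k)
  (hkn : (k <= n)%N) (hkp : (k <= \sum_(v < m) pv v)%N) :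
  (0 < m)%N -> (0 < n)%N -> (0 < k)%N ->
  (forall v, centered (Xs v)) ->
  is_svd (\mxrow_(v < m) Xs v) U D V ->
  orthogonal_mx Q ->
  let H := first_cols hkn U *m Q in
  (* V1kT w = top k rows of the p x p_w column block of V^T for view w *)
  let V1kT := fun w : 'I_m => first_rows hkp (submxrow V^T w) in
  forall v : 'I_m,
    let K := Xs v *m (Xs v)^T in
    \tr K - \tr (H^T *m K *m H) =
    \tr (Xs v *m (Xs v)^T)
    - (\tr (V1kT v *m (Xs v)^T *m Xs v *m (V1kT v)^T)
       + \sum_(w < m | w != v) \tr (V1kT v *m (Xs v)^T *m Xs w *m (V1kT w)^T)).
Proof.
move=> _ _ _ _ [[UtU UUt] [VtV VVt] [Hdiag _ _] HX] [QtQ QQt] H V1kT v K.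
set p := \sum_(v < m) pv v in D V hkp HX V1kT VtV VVt Hdiag *.
set X := \mxrow_(v < m) Xs v in HX.
pose Sn : 'M[R]_(k, n) := pid_mx k.
pose Sp : 'M[R]_(k, p) := pid_mx k.
pose Uk := U *m Sn^T.
pose S := Sn *m D *m Sp^T.
have HUk : first_cols hkn U = Uk by rewrite first_colsE /Uk /Sn tr_pid_mx.
have HV1 : forall w, V1kT w = Sp *m submxrow V^T w by move=> w; rewrite /V1kT first_rowsE.
have F1 : Sn *m D = S *m Sp.
  rewrite /S /Sp /Sn -!mulmxA tr_pid_mx pid_mx_id // diag_pid //.
  by rewrite mulmxA pid_mx_id.
have F2 : D *m Sp^T = Sn^T *m S.
  rewrite /S /Sp /Sn !tr_pid_mx !mulmxA pid_mx_id // -diag_pid //.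
  by rewrite -mulmxA pid_mx_id.
have FA : Uk^T *m Xs v = S *m V1kT v.
  rewrite HV1 -[Xs v](mxrowK Xs v) -/X mul_submxrow HX.
  rewrite /Uk trmx_mul trmxK !mulmxA -(mulmxA Sn) UtU mulmx1 F1.
  by rewrite mul_submxrow.
have FB : \sum_w (Xs w *m (V1kT w)^T) = Uk *m S.
  have -> : \sum_w (Xs w *m (V1kT w)^T) = \sum_w (Xs w *m submxcol (V *m Sp^T) w).
    apply: eq_bigr => w _; rewrite HV1 trmx_mul tr_submxrow trmxK submxcol_mul //.
  rewrite -mul_mxrow_mxcol submxcolK -/X HX mulmxA -(mulmxA _ V^T) VtV mulmx1 -mulmxA F2 /Uk !mulmxA.
  by [].
rewrite /K; congr (_ - _).
set V1 := V1kT v.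
have L : \tr (H^T *m (Xs v *m (Xs v)^T) *m H) = \tr (S *m (V1 *m V1^T *m S^T)).
  rewrite /H HUk trmx_mul.
  have -> : Q^T *m Uk^T *m (Xs v *m (Xs v)^T) *m (Uk *m Q)
      = Q^T *m ((Uk^T *m Xs v) *m (Uk^T *m Xs v)^T *m Q).
    by rewrite !trmx_mul !trmxK !mulmxA.
  rewrite mxtrace_mulC -(mulmxA _ Q) QQt mulmx1 FA trmx_mul !mulmxA.
  by [].
rewrite L mxtrace_mulC.
have R1 : \tr (V1 *m (Xs v)^T *m Xs v *m V1^T) +
    \sum_(w < m | w != v) \tr (V1 *m (Xs v)^T *m Xs w *m (V1kT w)^T)
    = \tr (V1 *m (Xs v)^T *m (Uk *m S)).
  rewrite -FB mulmx_sumr raddf_sum [RHS](bigD1 v) //=; congr (_ + _).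
    by rewrite !mulmxA.
  by apply: eq_bigr => w _; rewrite !mulmxA.
have G : (Xs v)^T *m Uk = V1^T *m S^T by rewrite -[LHS]trmxK trmx_mul trmxK FA trmx_mul.
rewrite R1 (mulmxA (V1 *m _)) -(mulmxA V1 _ Uk) G !mulmxA.
by [].
Qed.
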